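(* Let $r\ge3$. For every $P\in\mathbf W_{N,r}$, $$\pi(-P)\,E^{(r-1)}_{N,r}=\pi(P)\,F_{N,r}.$$
   Context: For integers $N,r\ge1$ let $S_{N,r}=\{(n_1,\dots,n_r)\in\mathbb Z^r:\ n_1+\dots+n_r=N,\ \text{each } n_i\ge3 \text{ odd}\}$; when used as an index set it is ordered lexicographically decreasingly. For $m=(m_1,\dots,m_r)$ and $n=(n_1,\dots,n_r)$ let $\delta\binom{m}{n}=1$ if $m_i=n_i$ for all $i$, and $0$ otherwise. $\mathbf V_{N,r}$ is the $\mathbb Q$-span of the monomials $x_1^{n_1-1}\cdots x_r^{n_r-1}$ with $(n_1,\dots,n_r)\in S_{N,r}$. $\mathsf{Vect}_{N,r}=\mathbb Q^{S_{N,r}}$ (row vectors), and $\pi:\mathbf V_{N,r}\to\mathsf{Vect}_{N,r}$ is the isomorphism sending $\sum a_{n_1,\dots,n_r}x_1^{n_1-1}\cdots x_r^{n_r-1}$ to $(a_{n_1,\dots,n_r})_{(n_1,\dots,n_r)\in S_{N,r}}$. For $r\ge2$, $\mathbf W_{N,r}=\{P\in\mathbf V_{N,r}: P(x_1,\dots,x_r)=P(x_2-x_1,x_2,x_3,\dots,x_r)-P(x_2-x_1,x_1,x_3,\dots,x_r)\}$. Ihara action: for $f\in\mathbb Q[t]$ and a polynomial $g$ in $r-1$ variables, $(f\mathbin{\underline\circ}g)(x_1,\dots,x_r)=f(x_1)g(x_2,\dots,x_r)+\sum_{i=1}^{r-1}\big(f(x_{i+1}-x_i)g(x_1,\dots,\widehat{x_{i+1}},\dots,x_r)-(-1)^{\deg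 f}f(x_i-x_{i+1})g(x_1,\dots,\widehat{x_i},\dots,x_r)\big)$ (hats denote omitted variables). For positive integers $m_i,n_i$, $e\binom{m_1,\dots,m_r}{n_1,\dots,n_r}$ is the coefficient of $x_1^{n_1-1}\cdots x_r^{n_r-1}$ in $t^{m_1-1}\mathbin{\underline\circ}\,(y_1^{m_2-1}\cdots y_{r-1}^{m_r-1})$. $E_{N,r}$ is the $S_{N,r}\times S_{N,r}$ matrix with $(m,n)$-entry $e\binom{m}{n}$. For $2\le j\le r$, $E^{(j)}_{N,r}$ is the $S_{N,r}\times S_{N,r}$ matrix with $(m,n)$-entry $\delta\binom{m_1,\dots,m_{r-j}}{n_1,\dots,n_{r-j}}\,e\binom{m_{r-j+1},\dots,m_r}{n_{r-j+1},\dots,n_r}$. $F_{N,r}=E_{N,r}-\mathrm{id}$. *)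

(* Defs.v *)
From HB Require Import structures.
From mathcomp Require Import all_boot all_order all_algebra.
Unset Printing Implicit Defensive.
Import Order.TTheory GRing.Theory Num.Theory.
Local Open Scope ring_scope.

(** Polynomials in r variables over Q, as iterated univariate polynomials:
    mpoly 0 = Q, mpoly (r+1) = (mpoly r)[x_1]; the outermost variable is
    x_1 (index 0), the next one x_2 (index 1), etc. *)
Fixpoint mpoly (r : nat) : comNzRingType :=
  match r with
  | 0 => rat
  | r'.+1 => {poly mpoly r'}
  end.

Fixpoint mcst (r : nat) (c : rat) : mpoly r :=
  match r return mpoly r with
  | 0 => c
  | r'.+1 => (mcst r' c)%:P : {poly mpoly r'}
  end.

(** the variable x_{i+1} (0-based index i); 0 if i >= r *)
Fixpoint mX (r i : nat) : mpoly r :=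
  match r return mpoly r with
  | 0 => 0
  | r'.+1 => (if i is i'.+1 then (mX r' i')%:P else 'X) : {poly mpoly r'}
  end.

Fixpoint mcoef (r : nat) : mpoly r -> seq nat -> rat :=
  match r return mpoly r -> seq nat -> rat with
  | 0 => fun c _ => c
  | r'.+1 => fun (p : {poly mpoly r'}) es => mcoef r' p`_(head 0%N es) (behead es)
  end.

Fixpoint mev (s : nat) (ys : seq (mpoly s)) (r : nat) : mpoly r -> mpoly s :=
  match r return mpoly r -> mpoly s with
  | 0 => fun c => mcst s c
  | r'.+1 => fun (p : {poly mpoly r'}) =>
      \sum_(i < size p) mev s (behead ys) r' p`_i * (head 0 ys) ^+ i
  end.

Definition mmono (r : nat) (es : seq nat) : mpoly r :=
  \prod_(i < r) mX r i ^+ nth 0%N es i.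

Definition uev (s : nat) (f : {poly rat}) (y : mpoly s) : mpoly s :=
  \sum_(i < size f) mcst s f`_i * y ^+ i.

Definition vars_but (r k : nat) : seq (mpoly r) :=
  [seq mX r j | j <- iota 0 r & j != k].

Definition ihara (r : nat) (f : {poly rat}) (g : mpoly r.-1) : mpoly r :=
  uev r f (mX r 0) * mev r (vars_but r 0) r.-1 g
  + \sum_(1 <= i < r)
      ( uev r f (mX r i - mX r i.-1) * mev r (vars_but r i) r.-1 g
      - (-1) ^+ (size f).-1 * uev r f (mX r i.-1 - mX r i)
          * mev r (vars_but r i.-1) r.-1 g ).

Definition ecoef (m n : seq nat) : rat :=
  let r := size m in
  mcoef r (ihara r ('X^((head 0%N m).-1) : {poly rat})
                (mmono r.-1 (map predn (behead m))))
        (map predn n).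

(** S_{N,r}: tuples of odd integers >= 3 summing to N, listed in
    lexicographically decreasing order. *)
Fixpoint Sset (N r : nat) : seq (seq nat) :=
  match r with
  | 0 => if N == 0%N then [:: [::]] else [::]
  | r'.+1 =>
      flatten [seq [seq k :: c | c <- Sset (N - k) r']
              | k <- rev [seq k <- iota 0 N.+1 | odd k && (3 <= k)%N]]
  end.

Definition nS (N r : nat) := size (Sset N r).
Definition Sidx (N r : nat) (i : 'I_(nS N r)) : seq nat := nth [::] (Sset N r) i.

Definition inV (N r : nat) (P : mpoly r) : Prop :=
  exists a : 'I_(nS N r) -> rat,
    P = \sum_(i < nS N r) mcst r (a i) * mmono r (map predn (Sidx N r i)).

Definition inW (N r : nat) (P : mpoly r) : Prop :=
  inV N r P /\
  P = mev r (mX r 1 - mX r 0 :: mX r 1 :: drop 2 (vars_but r r)) r P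
      - mev r (mX r 1 - mX r 0 :: mX r 0 :: drop 2 (vars_but r r)) r P.

Definition piV (N r : nat) (P : mpoly r) : 'rV[rat]_(nS N r) :=
  \row_i mcoef r P (map predn (Sidx N r i)).

Definition Emx (N r : nat) : 'M[rat]_(nS N r) :=
  \matrix_(i, j) ecoef (Sidx N r i) (Sidx N r j).

Definition Ejmx (N r j : nat) : 'M[rat]_(nS N r) :=
  \matrix_(i, k)
    ((take (r - j) (Sidx N r i) == take (r - j) (Sidx N r k))%:R
     * ecoef (drop (r - j) (Sidx N r i)) (drop (r - j) (Sidx N r k))).

Definition Fmx (N r : nat) : 'M[rat]_(nS N r) := Emx N r - 1%:M.

(* Main.v *)
Require Import Defs.
From HB Require Import structures.
From mathcomp Require Import all_boot all_order all_algebra.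
From mathcomp Require Import ring zify.
Import GRing.Theory.
Local Open Scope ring_scope.

Lemma mcst0 r : mcst r 0 = 0.
Proof. by elim: r => [//|r IH] /=; rewrite IH. Qed.
Lemma mcst1 r : mcst r 1 = 1.
Proof. by elim: r => [//|r IH] /=; rewrite IH. Qed.
Lemma mcstD r a b : mcst r (a + b) = mcst r a + mcst r b.
Proof. by elim: r => [//|r IH] /=; rewrite IH polyCD. Qed.
Lemma mcstN r a : mcst r (- a) = - mcst r a.
Proof. by elim: r => [//|r IH] /=; rewrite IH polyCN. Qed.
Lemma mcstM r a b : mcst r (a * b) = mcst r a * mcst r b.
Proof. by elim: r => [//|r IH] /=; rewrite IH polyCM. Qed.

Lemma mev_wide s ys r (p : mpoly r.+1) n :
  mev s (behead ys) r 0 = 0 -> (size p <= n)%N ->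
  mev s ys r.+1 p = \sum_(i < n) mev s (behead ys) r p`_i * (head 0 ys) ^+ i.
Proof.
move=> h0 hn /=.
rewrite (big_ord_widen n (fun i => mev s (behead ys) r p`_i * (head 0 ys) ^+ i) hn).
rewrite [RHS](bigID (fun i : 'I_n => (i < size p)%N)) /= [X in _ + X]big1 ?addr0 //.
by move=> i; rewrite -leqNgt => hi; rewrite nth_default // h0 mul0r.
Qed.

Lemma mev0 s ys r : mev s ys r 0 = 0.
Proof.
elim: r ys => [|r IH] ys /=; first by rewrite mcst0.
by rewrite size_poly0 big_ord0.
Qed.

Lemma mevD s ys r p q : mev s ys r (p + q) = mev s ys r p + mev s ys r q.
Proof.
elim: r ys p q => [|r IH] ys p q; first by rewrite /= mcstD.
set n := maxn (size p) (size q).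
rewrite (@mev_wide _ _ _ _ n) ?mev0 ?size_add //.
rewrite (@mev_wide _ _ _ p n) ?mev0 ?leq_maxl //.
rewrite (@mev_wide _ _ _ q n) ?mev0 ?leq_maxr //.
rewrite -big_split /=; apply: eq_bigr => i _.
by rewrite coefD IH mulrDl.
Qed.


Lemma mev_sum s ys r I (l : seq I) (Q : pred I) (F : I -> mpoly r) :
  mev s ys r (\sum_(i <- l | Q i) F i) = \sum_(i <- l | Q i) mev s ys r (F i).
Proof. exact: (big_morph _ (mevD s ys r) (mev0 s ys r)). Qed.

Lemma mevN s ys r p : mev s ys r (- p) = - mev s ys r p.
Proof. by apply/eqP; rewrite -subr_eq0 opprK -mevD addNr mev0. Qed.
Lemma mevB s ys r p q : mev s ys r (p - q) = mev s ys r p - mev s ys r q.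
Proof. by rewrite mevD mevN. Qed.

Lemma mev_CX s ys r (c : mpoly r) i :
  mev s ys r.+1 (c%:P * 'X^i : {poly mpoly r}) = mev s (behead ys) r c * (head 0 ys) ^+ i.
Proof.
rewrite (@mev_wide _ _ _ _ i.+1) ?mev0 //; last first.
  by rewrite mul_polyC (leq_trans (size_scale_leq _ _)) ?size_polyXn.
rewrite big_ord_recr /= big1 ?add0r; last first.
  by move=> j _; rewrite coefCM coefXn (ltn_eqF (ltn_ord j)) mulr0 mev0 mul0r.
by rewrite coefCM coefXn eqxx mulr1.
Qed.

Lemma mevM s ys r p q : mev s ys r (p * q) = mev s ys r p * mev s ys r q.
Proof.
elim: r ys p q => [|r IH] ys p q; first by rewrite /= mcstM.
have key : forall (p q : {poly mpoly r}), mev s ys r.+1 (p * q) = mev s ys r.+1 p * mev s ys r.+1 q.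
  move=> {}p {}q.
  have Ep : p = \sum_(i < size p) (p`_i)%:P * 'X^i.
    by rewrite -{1}[p]coefK poly_def; apply: eq_bigr => i _; rewrite mul_polyC.
  have Eq : q = \sum_(i < size q) (q`_i)%:P * 'X^i.
    by rewrite -{1}[q]coefK poly_def; apply: eq_bigr => i _; rewrite mul_polyC.
  rewrite Ep Eq mulr_suml !mev_sum mulr_suml; apply: eq_bigr => i _.
  rewrite mulr_sumr !mev_sum mulr_sumr; apply: eq_bigr => j _.
  rewrite mulrA -(mulrA _ 'X^i) -commr_polyXn mulrA -polyCM -mulrA -exprD.
  by rewrite !mev_CX IH exprD; ring.
exact: key.
Qed.


Lemma mev_mcst s ys r c : mev s ys r (mcst r c) = mcst s c.
Proof.
elim: r ys => [//|r IH] ys.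
have -> : mcst r.+1 c = (mcst r c)%:P * 'X^0 :> {poly mpoly r} by rewrite /= mulr1.
by rewrite mev_CX IH expr0 mulr1.
Qed.

Lemma mev1 s ys r : mev s ys r 1 = 1.
Proof. by rewrite -(mcst1 r) mev_mcst mcst1. Qed.

Lemma mevXn s ys r p n : mev s ys r (p ^+ n) = mev s ys r p ^+ n.
Proof. by elim: n => [|n IH]; rewrite ?expr0 ?mev1 // !exprS mevM IH. Qed.

Lemma mev_prod s ys r n (F : 'I_n -> mpoly r) :
  mev s ys r (\prod_(i < n) F i) = \prod_(i < n) mev s ys r (F i).
Proof. exact: (big_morph _ (mevM s ys r) (mev1 s ys r)). Qed.

Lemma mev_mX s ys r i : (i < r)%N -> mev s ys r (mX r i) = nth 0 ys i.
Proof.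
elim: r ys i => [//|r IH] ys [|i] hi.
  have -> : mX r.+1 0 = 1%:P * 'X^1 :> {poly mpoly r} by rewrite /= mul1r expr1.
  by rewrite mev_CX mev1 mul1r expr1; case: ys.
have -> : mX r.+1 i.+1 = (mX r i)%:P * 'X^0 :> {poly mpoly r} by rewrite /= mulr1.
by rewrite mev_CX expr0 mulr1 IH // nth_behead.
Qed.

Lemma mev_ext s ys zs r p :
  (forall i, (i < r)%N -> nth 0 ys i = nth 0 zs i) -> mev s ys r p = mev s zs r p.
Proof.
elim: r ys zs p => [//|r IH] ys zs p h /=.
have h0 : head 0 ys = head 0 zs.
  by move: (h 0%N isT); rewrite !nth0.
rewrite h0; apply: eq_bigr => i _; congr (_ * _); apply: IH => j hj.
by rewrite !nth_behead; apply: h.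
Qed.

Lemma mev_comp s ys t zs u p :
  mev s ys t (mev t zs u p) = mev s (map (mev s ys t) zs) u p.
Proof.
elim: u zs p => [|u IH] zs p; first by rewrite /= mev_mcst.
rewrite /= mev_sum; apply: eq_bigr => i _.
rewrite mevM mevXn IH; congr (_ * _ ^+ _).
  by case: zs.
by case: zs => //=; rewrite mev0.
Qed.

Lemma mev_polyC s ys t q :
  mev s.+1 (map polyC ys) t q = (mev s ys t q)%:P :> {poly mpoly s}.
Proof.
elim: t ys q => [//|t IH] ys q.
rewrite /= rmorph_sum; apply: eq_bigr => i _.
rewrite rmorphM rmorphXn.
have -> : behead (map polyC ys) = map polyC (behead ys) by case: ys.
rewrite IH; congr (_ * _ ^+ _); by case: ys.
Qed.

Lemma poly_expand (R : nzRingType) (p : {poly R}) :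
  p = \sum_(i < size p) (p`_i)%:P * 'X^i.
Proof. by rewrite -{1}[p]coefK poly_def; apply: eq_bigr => i _; rewrite mul_polyC. Qed.

Lemma mev_id r ys p : (forall i, (i < r)%N -> nth 0 ys i = mX r i) -> mev r ys r p = p.
Proof.
elim: r ys p => [|r IH] ys p h; first by [].
rewrite (@mev_ext _ _ (('X :: map polyC (mkseq (mX r) r)) : seq (mpoly r.+1))); last first.
  move=> [|i] hi; rewrite h //= (nth_map 0) ?size_mkseq // nth_mkseq //.
rewrite /= [RHS]poly_expand; apply: eq_bigr => i _.
rewrite mev_polyC IH // => j hj; by rewrite nth_mkseq.
Qed.


Lemma mcoef0 r es : mcoef r 0 es = 0.
Proof. by elim: r es => [//|r IH] es /=; rewrite coef0 IH. Qed.
Lemma mcoefD r p q es : mcoef r (p + q) es = mcoef r p es + mcoef r q es.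
Proof. by elim: r p q es => [//|r IH] p q es /=; rewrite coefD IH. Qed.
Lemma mcoefN r p es : mcoef r (- p) es = - mcoef r p es.
Proof. by apply/eqP; rewrite -subr_eq0 opprK -mcoefD addNr mcoef0. Qed.
Lemma mcoefB r p q es : mcoef r (p - q) es = mcoef r p es - mcoef r q es.
Proof. by rewrite mcoefD mcoefN. Qed.
Lemma mcoef_sum r es I (l : seq I) (Q : pred I) (F : I -> mpoly r) :
  mcoef r (\sum_(i <- l | Q i) F i) es = \sum_(i <- l | Q i) mcoef r (F i) es.
Proof. exact: (big_morph _ (fun p q => mcoefD r p q es) (mcoef0 r es)). Qed.
Lemma mcoefCM r c p es : mcoef r (mcst r c * p) es = c * mcoef r p es.
Proof. by elim: r p es => [//|r IH] p es /=; rewrite coefCM IH. Qed.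

Lemma mmono_S r es :
  mmono r.+1 es = (mmono r (behead es))%:P * 'X^(head 0%N es) :> {poly mpoly r}.
Proof.
rewrite /mmono big_ord_recl mulrC rmorph_prod; congr (_ * _).
  apply: eq_bigr => i _; rewrite rmorphXn /= nth_behead //.

Qed.

Lemma mcoef_mmono r es es' : size es = r -> size es' = r ->
  mcoef r (mmono r es) es' = (es == es')%:R.
Proof.
elim: r es es' => [|r IH] [|e es] [|e' es'] //= h1 h2.
  by rewrite /mmono big_ord0.
rewrite (mmono_S r (e :: es)) /= coefCM coefXn eqseq_cons.
case: (e' =P e) => [->|ne] /=; last first.
  by rewrite mulr0 mcoef0 (introF eqP (fun x => ne (esym x))).
rewrite eqxx mulr1 IH //; by case: h1; case: h2.
Qed.


Definition Phi (r : nat) (Q : mpoly r) : mpoly r :=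
  mev r (mX r 0 :: vars_but r 0) r Q
  + \sum_(1 <= i < r) (mev r (mX r i - mX r i.-1 :: vars_but r i) r Q
                      - mev r (mX r i.-1 - mX r i :: vars_but r i.-1) r Q).

Lemma Phi0 r : Phi r 0 = 0.
Proof. by rewrite /Phi mev0 add0r big1 // => i _; rewrite !mev0 subr0. Qed.

Lemma PhiD r p q : Phi r (p + q) = Phi r p + Phi r q.
Proof.
rewrite /Phi mevD -!addrA; congr (_ + _); rewrite addrCA; congr (_ + _).
rewrite -big_split /=; apply: eq_bigr => i _; rewrite !mevD; ring.
Qed.

Lemma Phi_sum r I (l : seq I) (Q : pred I) (F : I -> mpoly r) :
  Phi r (\sum_(i <- l | Q i) F i) = \sum_(i <- l | Q i) Phi r (F i).
Proof. exact: (big_morph _ (PhiD r) (Phi0 r)). Qed.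

Lemma PhiCM r c p : Phi r (mcst r c * p) = mcst r c * Phi r p.
Proof.
rewrite /Phi mevM mev_mcst mulrDr mulr_sumr; congr (_ + _); apply: eq_bigr => i _.
by rewrite !mevM !mev_mcst mulrBr.
Qed.

Lemma uevXn r k y : uev r 'X^k y = y ^+ k.
Proof.
rewrite /uev size_polyXn big_ord_recr /= coefXn eqxx mcst1 mul1r big1 ?add0r //.
by move=> i _; rewrite coefXn (ltn_eqF (ltn_ord i)) mcst0 mul0r.
Qed.

Lemma mev_cons_mono s y zs r k es :
  mev s (y :: zs) r.+1 (mmono r.+1 (k :: es)) = y ^+ k * mev s zs r (mmono r es).
Proof. by rewrite (mmono_S r (k :: es)) mev_CX mulrC. Qed.

Lemma ihara_mono r k es : ~~ odd k ->
  ihara r.+1 ('X^k) (mmono r es) = Phi r.+1 (mmono r.+1 (k :: es)).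
Proof.
move=> hk; rewrite /ihara /Phi !uevXn mev_cons_mono; congr (_ + _).
apply: eq_bigr => i _; rewrite !mev_cons_mono !uevXn size_polyXn /=.
by rewrite -signr_odd (negbTE hk) expr0 mul1r.
Qed.

Lemma ecoef_mono r m n : size m = r.+1 -> odd (head 0%N m) ->
  ecoef m n = mcoef r.+1 (Phi r.+1 (mmono r.+1 (map predn m))) (map predn n).
Proof.
case: m => [//|[//|m0] m] /= [hs] ho.
rewrite /ecoef /= hs ihara_mono //.
Qed.

Lemma sum_ecoef r n (ms : 'I_n -> seq nat) (c : 'I_n -> rat) nn :
  (forall i, size (ms i) = r.+1 /\ odd (head 0%N (ms i))) ->
  \sum_i c i * ecoef (ms i) nn =
  mcoef r.+1 (Phi r.+1 (\sum_i mcst r.+1 (c i) * mmono r.+1 (map predn (ms i)))) (map predn nn).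
Proof.
move=> h; rewrite Phi_sum mcoef_sum; apply: eq_bigr => i _.
by rewrite PhiCM mcoefCM; case: (h i) => h1 h2; rewrite (ecoef_mono _ _ _ h1 h2).
Qed.


Lemma Sset_prop N r m : m \in Sset N r ->
  size m = r /\ all (fun k => odd k && (3 <= k)%N) m.
Proof.
elim: r N m => [|r IH] N m /=.
  by case: (N == 0%N) => //; rewrite inE => /eqP ->.
move=> /flatten_mapP [k]; rewrite mem_rev mem_filter => /andP [hk _] /mapP [c hc ->].
by case: (IH _ _ hc) => h1 h2; rewrite /= h1 hk h2.
Qed.

Lemma Sset_uniq N r : uniq (Sset N r).
Proof.
elim: r N => [|r IH] N /=; first by case: (N == 0%N).
apply: (@allpairs_uniq_dep nat (fun _ => seq nat) _ (fun k c => k :: c)).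
- by rewrite rev_uniq filter_uniq // iota_uniq.
- by move=> k _; exact: IH.
- by move=> [k1 c1] [k2 c2] _ _ /= [e1 e2]; subst.
Qed.


Lemma Sidx_prop N r i : size (Sidx N r i) = r /\ all (fun k => odd k && (3 <= k)%N) (Sidx N r i).
Proof. by apply: Sset_prop; apply: mem_nth; exact: (ltn_ord i). Qed.

Lemma predn_map_inj s t : all (fun k => 0 < k)%N s -> all (fun k => 0 < k)%N t ->
  map predn s = map predn t -> s = t.
Proof.
elim: s t => [|x s IH] [|y t] //= /andP [hx hs] /andP [hy ht] [e1 e2].
by rewrite (IH t) //; congr (_ :: _); rewrite -(prednK hx) -(prednK hy) e1.
Qed.

Lemma Sidx_eq N r i j : (map predn (Sidx N r i) == map predn (Sidx N r j)) = (i == j).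
Proof.
apply/eqP/eqP => [h|->//]; apply: val_inj => /=.
have pos k : all (fun k => 0 < k)%N (Sidx N r k).
  case: (Sidx_prop N r k) => _ /allP h'; apply/allP => x /h' /andP [_ hx].
  by apply: leq_trans hx.
have := predn_map_inj _ _ (pos i) (pos j) h.
rewrite /Sidx => /eqP; rewrite nth_uniq ?Sset_uniq //; first by move/eqP.
Qed.

Lemma inV_coef N r P a :
  P = \sum_(i < nS N r) mcst r (a i) * mmono r (map predn (Sidx N r i)) ->
  forall j, mcoef r P (map predn (Sidx N r j)) = a j.
Proof.
move=> -> j; rewrite mcoef_sum (bigD1 j) //= big1 ?addr0.
  by rewrite mcoefCM mcoef_mmono ?size_map ?(proj1 (Sidx_prop _ _ _)) // eqxx mulr1.
move=> i hij; rewrite mcoefCM mcoef_mmono ?size_map ?(proj1 (Sidx_prop _ _ _)) //.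
by rewrite Sidx_eq (negbTE hij) mulr0.
Qed.

Lemma Sidx_head N r i : (0 < r)%N -> odd (head 0%N (Sidx N r i)).
Proof.
case: (Sidx_prop N r i); case: (Sidx N r i) => [|x s] /=; first by move=> <-.
by move=> _ /andP [/andP [] ] .
Qed.

Lemma L1 N r P : inV N r.+1 P -> forall j,
  (piV N r.+1 P *m Emx N r.+1) 0 j = mcoef r.+1 (Phi r.+1 P) (map predn (Sidx N r.+1 j)).
Proof.
move=> [a ha] j; rewrite !mxE.
transitivity (\sum_k a k * ecoef (Sidx N r.+1 k) (Sidx N r.+1 j)).
  by apply: eq_bigr => k _; rewrite !mxE (inV_coef _ _ _ _ ha).
rewrite (sum_ecoef r) ?ha // => i; split; first exact: (proj1 (Sidx_prop _ _ _)).
exact: Sidx_head.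
Qed.


Definition mevX r (zs : seq (mpoly r)) (P : mpoly r.+1) : mpoly r.+1 :=
  mev r.+1 (('X :: map polyC zs) : seq (mpoly r.+1)) r.+1 P.

Definition Phi' r (P : mpoly r.+1) : mpoly r.+1 :=
  mevX r (mX r 0 :: vars_but r 0) P
  + \sum_(1 <= i < r) (mevX r (mX r i - mX r i.-1 :: vars_but r i) P
                      - mevX r (mX r i.-1 - mX r i :: vars_but r i.-1) P).

Lemma coef_mevX r zs (P : {poly mpoly r}) b : (mevX r zs P)`_b = mev r zs r P`_b.
Proof.
rewrite /mevX /= coef_sum.
under eq_bigr => i _ do rewrite mev_polyC coefCM coefXn.
case: (ltnP b (size P)) => hb.
  rewrite (bigD1 (Ordinal hb)) //= eqxx mulr1 big1 ?addr0 // => i hi.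
  by rewrite (_ : (b == i) = false) ?mulr0 //; apply/negbTE; apply: contra hi => /eqP e; apply/eqP/val_inj.
rewrite nth_default // mev0 big1 // => i _.
by rewrite (_ : (b == i) = false) ?mulr0 //; apply/negbTE; rewrite neq_ltn (leq_trans (ltn_ord i) hb) orbT.
Qed.

Lemma coef_Phi' r (P : {poly mpoly r}) b : (Phi' r P)`_b = Phi r P`_b.
Proof.
rewrite /Phi' /Phi coefD coef_mevX coef_sum; congr (_ + _); apply: eq_bigr => i _.
by rewrite coefB !coef_mevX.
Qed.

Lemma mcoef_S r p e es : mcoef r.+1 p (e :: es) = mcoef r p`_e es.
Proof. by []. Qed.

Lemma mcoef_Phi' r (P : {poly mpoly r}) e es :
  mcoef r.+1 (Phi' r P) (e :: es) = mcoef r (Phi r P`_e) es.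
Proof. by rewrite mcoef_S coef_Phi'. Qed.

Lemma coef_CM_mono r c es b :
  ((mcst r.+1 c * mmono r.+1 es : {poly mpoly r}))`_b
  = mcst r c * mmono r (behead es) * (b == head 0%N es)%:R.
Proof.
by rewrite mmono_S (_ : mcst r.+1 c = (mcst r c)%:P) // mulrA -polyCM coefCM coefXn.
Qed.

Lemma L2 N r P : inV N r.+2 P -> forall j,
  (piV N r.+2 P *m Ejmx N r.+2 r.+1) 0 j = mcoef r.+2 (Phi' r.+1 P) (map predn (Sidx N r.+2 j)).
Proof.
move=> [a ha] j; rewrite !mxE.
have hsub : (r.+2 - r.+1 = 1)%N by rewrite subSnn.
pose hd k := (head 0%N (Sidx N r.+2 k)).-1.
have hS k : exists x s, Sidx N r.+2 k = x :: s /\ (size s = r.+1) /\ odd x /\ (3 <= x)%N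
                        /\ all (fun k => odd k && (3 <= k)%N) s.
  case: (Sidx_prop N r.+2 k); case: (Sidx N r.+2 k) => [//|x s] /= [hs] /andP [/andP [h1 h2] h3].
  by exists x, s.
transitivity (\sum_k (a k * (hd k == hd j)%:R) * ecoef (behead (Sidx N r.+2 k)) (behead (Sidx N r.+2 j))).
  apply: eq_bigr => k _; rewrite !mxE (inV_coef _ _ _ _ ha) hsub !drop1 -mulrA.
  congr (_ * (_%:R * _)); rewrite /hd.
  have [x [s [-> [_ [_ [hx _]]]]]] := hS k; have [y [t [-> [_ [_ [hy _]]]]]] := hS j.
  rewrite /= !take0 eqseq_cons eqxx andbT.
  by case: x hx => // x _; case: y hy.
rewrite (sum_ecoef r); last first.
  move=> k; have [x [s [-> [hs [_ [_ hall]]]]]] := hS k; split => //=.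
  by case: s hs hall => [//|z s] _ /= /andP [/andP []].
have [y [t [ej _]]] := hS j.
rewrite ej; change (map predn (y :: t)) with (y.-1 :: map predn t); rewrite mcoef_Phi'; congr (mcoef _ (Phi _ _) _).
rewrite ha coef_sum; apply: eq_bigr => k _.
rewrite coef_CM_mono /hd ej /= eq_sym mcstM.
have [x [s [ek _]]] := hS k; rewrite ek /=.
by case: (_ == _); rewrite ?mcst1 ?mcst0 ?mulr1 ?mulr0 ?mul0r ?polyC0 ?mul0r.
Qed.


Lemma filter_iota_neq R k : (k < R)%N ->
  [seq j <- iota 0 R | j != k] = iota 0 k ++ iota k.+1 (R - k.+1).
Proof.
move=> hk.
have -> : iota 0 R = iota 0 k ++ k :: iota k.+1 (R - k.+1).
  have e : (R = k + (R - k.+1).+1)%N by lia.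
  by rewrite [in LHS]e iotaD add0n.
rewrite filter_cat /= eqxx; congr (_ ++ _); apply/all_filterP/allP => j.
  by rewrite mem_iota => /andP [_ h]; apply/eqP => e; rewrite e ltnn in h.
by rewrite mem_iota => /andP [h _]; apply/eqP => e; rewrite e ltnn in h.
Qed.

Lemma nth_vb R k i : (k < R)%N -> (i < R.-1)%N ->
  nth 0 (vars_but R k) i = mX R (if (i < k)%N then i else i.+1).
Proof.
move=> hk hi; rewrite /vars_but filter_iota_neq // (nth_map 0%N); last first.
  by rewrite size_cat !size_iota; lia.
rewrite nth_cat size_iota; case: ifP => h.
  by rewrite nth_iota.
rewrite nth_iota; last by lia.
by congr (mX R _); lia.
Qed.

Lemma nth_vbR R i : (i < R)%N -> nth 0 (vars_but R R) i = mX R i.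
Proof.
move=> hi; rewrite /vars_but (_ : [seq j <- iota 0 R | j != R] = iota 0 R).
  by rewrite (nth_map 0%N) ?size_iota // nth_iota.
apply/all_filterP/allP => j; rewrite mem_iota => /andP [_ h].
by apply/eqP => e; rewrite e ltnn in h.
Qed.

Lemma nth_xs R i : (i < R - 2)%N -> nth 0 (drop 2 (vars_but R R)) i = mX R i.+2.
Proof. by move=> hi; rewrite nth_drop nth_vbR //; lia. Qed.

Lemma nth_map_polyC r (l : seq (mpoly r)) j :
  nth 0 (map polyC l : seq {poly mpoly r}) j = (nth 0 l j)%:P.
Proof. by elim: l j => [|x l IH] [|j] //=. Qed.

Lemma Sidx_dec N R k : exists x s, Sidx N R.+1 k = x :: s /\ (size s = R) /\ odd x /\ (3 <= x)%N
                        /\ all (fun k => odd k && (3 <= k)%N) s.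
Proof.
case: (Sidx_prop N R.+1 k); case: (Sidx N R.+1 k) => [//|x s] /= [hs] /andP [/andP [h1 h2] h3].
by exists x, s.
Qed.

Lemma even_mev N R P : inV N R.+1 P -> forall s a rest,
  mev s (- a :: rest) R.+1 P = mev s (a :: rest) R.+1 P.
Proof.
move=> [c ->] s a rest; rewrite !mev_sum; apply: eq_bigr => k _.
rewrite !mevM !mev_mcst; congr (_ * _).
have [x [t [-> [_ [hx _]]]]] := Sidx_dec N R k.
rewrite map_cons !mev_cons_mono exprNn -signr_odd.
by case: x hx => // x /= hx; rewrite (negbTE hx) expr0 mul1r.
Qed.


Lemma nth_map0 (T U : Type) (x0 : T) (y0 : U) (f : T -> U) l j :
  f x0 = y0 -> nth y0 (map f l) j = f (nth x0 l j).
Proof. by move=> h; elim: l j => [|x l IH] [|j] //=. Qed.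

Lemma nthSS (T : Type) (x0 : T) a b l j : nth x0 (a :: b :: l) j.+2 = nth x0 l j.
Proof. by []. Qed.

Section Swap.
Variables (N R : nat) (P : mpoly R.+1).
Hypothesis hR : (0 < R)%N.
Hypothesis hW : inW N R.+1 P.
Local Notation x i := (mX R.+1 i).
Local Notation xs := (drop 2 (vars_but R.+1 R.+1)).

Lemma swap_id : mev R.+1 (x 1 :: x 0 :: xs) R.+1 P = - P.
Proof.
case: hW => hV hw.
set F := mev R.+1 (x 1 :: x 0 :: xs) R.+1.
have Fx1 : F (x 1) = x 0 by rewrite /F mev_mX.
have Fx0 : F (x 0) = x 1 by rewrite /F mev_mX.
have Fx10 : F (x 1 - x 0) = x 0 - x 1 by rewrite /F mevB !mev_mX.
have ext (a b : mpoly R.+1) : mev R.+1 (a :: b :: map F xs) R.+1 P = mev R.+1 (a :: b :: xs) R.+1 P.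
  apply: mev_ext => -[|[|j]] hj //=.
  rewrite (@nth_map0 _ _ (0 : mpoly R.+1) (0 : mpoly R.+1)); last by rewrite /F mev0.
  rewrite /F nth_xs; last by lia.
  rewrite mev_mX; last lia.
  change (nth 0 (drop 2 (vars_but R.+1 R.+1)) j = mX R.+1 j.+2); rewrite nth_xs //; lia.
rewrite {1}hw /F mevB !mev_comp -/F !map_cons Fx10 Fx1 Fx0 !ext.
rewrite (_ : x 0 - x 1 = - (x 1 - x 0)); last by rewrite opprB.
rewrite !(even_mev _ _ _ hV).
transitivity (- (mev R.+1 (x 1 - x 0 :: x 1 :: xs) R.+1 P - mev R.+1 (x 1 - x 0 :: x 0 :: xs) R.+1 P)).
  by rewrite opprB.
by rewrite -hw.
Qed.

Lemma antisym a b rest :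
  mev R.+1 (a :: b :: rest) R.+1 P = - mev R.+1 (b :: a :: rest) R.+1 P.
Proof.
have := congr1 (mev R.+1 (b :: a :: rest) R.+1) swap_id; rewrite mevN mev_comp !map_cons !mev_mX // => <-.
apply: mev_ext => -[|[|j]] hj //.
rewrite !nthSS (@nth_map0 _ _ (0 : mpoly R.+1) (0 : mpoly R.+1)); last by rewrite mev0.
rewrite nth_xs; last by lia.
by rewrite mev_mX.
Qed.
End Swap.


Lemma nth_vbE R k i x0 : x0 = 0 -> (k < R)%N -> (i < R.-1)%N ->
  nth x0 (vars_but R k) i = mX R (if (i < k)%N then i else i.+1).
Proof. by move=> ->; apply: nth_vb. Qed.

Section L3.
Variables (N r : nat) (P : mpoly r.+1).
Hypothesis hr : (1 < r)%N.
Hypothesis hW : inW N r.+1 P.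

Lemma hid : mev r.+1 (mX r.+1 0 :: vars_but r.+1 0) r.+1 P = P.
Proof.
apply: mev_id => -[|j] hj //=.
by etransitivity; first (apply: (@nth_vb r.+1 0 j); lia).
Qed.

Lemma hid' : mevX r (mX r 0 :: vars_but r 0) P = P.
Proof.
apply: mev_id => -[|[|j]] hj //.
rewrite /= nth_map_polyC nth_vb //; lia.
Qed.

Lemma flipX k d : (0 < k <= r)%N ->
  mev r.+1 ('X :: d%:P :: map polyC (vars_but r k.-1)) r.+1 P
  = - mev r.+1 (d%:P :: vars_but r.+1 k) r.+1 P.
Proof.
move=> hk; rewrite (@antisym N r P _ hW); last lia.
congr (- _); apply: mev_ext => -[|[|j]] hj //.
  change ('X = nth 0 (vars_but r.+1 k) 0 :> {poly mpoly r}).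
  by rewrite nth_vbE //; [by case: k hk | lia].
change (nth 0 (map polyC (vars_but r k.-1)) j = nth 0 (vars_but r.+1 k) j.+1 :> {poly mpoly r}).
rewrite nth_map_polyC !nth_vbE //; try lia.
by case: ifP => h1; case: ifP => h2 //; lia.
Qed.

Lemma T1 : mev r.+1 (mX r.+1 1 - mX r.+1 0 :: vars_but r.+1 1) r.+1 P
         - mev r.+1 (mX r.+1 0 - mX r.+1 1 :: vars_but r.+1 0) r.+1 P = - P.
Proof.
case: hW => hV hw.
rewrite (_ : mX r.+1 0 - mX r.+1 1 = - (mX r.+1 1 - mX r.+1 0)); last by rewrite opprB.
rewrite (even_mev _ _ _ hV).
rewrite (@mev_ext _ _ (mX r.+1 1 - mX r.+1 0 :: mX r.+1 0 :: drop 2 (vars_but r.+1 r.+1))); last first.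
  move=> -[|[|j]] hj //.
  change (nth 0 (vars_but r.+1 1) j.+1 = nth 0 (drop 2 (vars_but r.+1 r.+1)) j).
  rewrite nth_vbE //; try lia; rewrite nth_drop nth_vbR //; try lia.
rewrite [X in _ - X](@mev_ext _ _ (mX r.+1 1 - mX r.+1 0 :: mX r.+1 1 :: drop 2 (vars_but r.+1 r.+1))); last first.
  move=> -[|[|j]] hj //.
    change (nth 0 (vars_but r.+1 0) 0 = mX r.+1 1); rewrite nth_vbE //; lia.
  change (nth 0 (vars_but r.+1 0) j.+1 = nth 0 (drop 2 (vars_but r.+1 r.+1)) j).
  rewrite nth_vbE //; try lia; rewrite nth_drop nth_vbR //; try lia.
rewrite {3}hw opprB.
done.
Qed.

Lemma L3 : Phi r.+1 P - P + Phi' r P = 0.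
Proof.
rewrite /Phi /Phi' hid hid' big_ltn //.
have -> : \sum_(2 <= i < r.+1) (mev r.+1 (mX r.+1 i - mX r.+1 i.-1 :: vars_but r.+1 i) r.+1 P
     - mev r.+1 (mX r.+1 i.-1 - mX r.+1 i :: vars_but r.+1 i.-1) r.+1 P)
  = - \sum_(1 <= i < r) (mevX r (mX r i - mX r i.-1 :: vars_but r i) P
                      - mevX r (mX r i.-1 - mX r i :: vars_but r i.-1) P).
  rewrite big_add1 -sumrN; apply: eq_big_nat => i hi.
  rewrite /mevX !map_cons (flipX i.+1); last lia.
  rewrite (flipX i); last lia.
  case: i hi => [//|i] hi.
  by rewrite !polyCB opprD !opprK.
rewrite T1.
  by move: (\sum_(1 <= i < r) _) => S; ring.
lia.
Qed.
End L3.


Theorem lemma4p9 (N r : nat) (hr : (3 <= r)%N) (P : mpoly r) :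
  inW N r P -> piV N r (- P) *m Ejmx N r r.-1 = piV N r P *m Fmx N r.
Proof.
case: r hr P => [|[|[|q]]] // _ P hW.
have hV : inV N q.+3 P by case: hW.
have hneg : piV N q.+3 (- P) = - piV N q.+3 P.
  by apply/rowP => j; rewrite !mxE mcoefN.
apply/rowP => j.
rewrite hneg mulNmx /Fmx mulmxBr mulmx1 !mxE.
have e2 := L2 N q.+1 P hV j; have e1 := L1 N q.+2 P hV j.
rewrite !mxE in e1 e2.
rewrite e1 e2.
have := L3 N q.+2 P isT hW.
move: (Phi q.+3 P) (Phi' q.+2 P) => A B hAB.
have -> : B = - (A - P) by apply/eqP; rewrite -addr_eq0 addrC hAB.
by rewrite mcoefN opprK mcoefB.
Qed.
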